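(* Fix $k\ge1$. Under the mean-field and homogeneity assumptions, the activation rate of the $k$ key nodes, \[ m_k(t)=\lim_{\Delta\downarrow0}\frac1\Delta\,\mathbb P\{\tau_k\le t+\Delta\mid\tau_k\ge t\}, \] satisfies \[ m_k(t)\approx\lambda(\hat a(t))\,\frac{p_{k-1}(t)}{1-p_k(t)}, \] where $p_j(t)$, $0\le j\le k$, is the probability that the time-inhomogeneous Markov chain on $\{0,\dots,k\}$ started at $0$, with jump rates $i\to i+1$ equal to $(k-i)\lambda(\hat a(t))$ ($0\le i\le k-1$) and $i\to i-1$ equal to $i\mu(\hat a(t))$ ($1\le i\le k-1$), state $k$ absorbing, is in state $j$ at time $t$ (equivalently, the solution of the corresponding Kolmogorov forward equations with $p_0(0)=1$, $p_1(0)=\dots=p_k(0)=0$).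
   Context: A signal network has $n$ aggregated nodes with state $\mathbf X(t)\in\{0,1\}^n$ (1 = active, 0 = passive), all passive at time $0$; nodes $1,\dots,k$ are key nodes, and $\tau_k=\inf\{t\ge0:X_1(t)=\dots=X_k(t)=1\}$. Node $i$ becomes active at rate $\lambda(a_i(t))$ and passive at rate $\mu(a_i(t))$, where $a_i(t)$ is the fraction of active neighbours of $i$, $\lambda$ decreasing and $\mu$ increasing; $\hat a(t)$ is the expected fraction of active nodes at time $t$. Mean-field assumption: all rates replaced by $\lambda(\hat a(t))$ and $\mu(\hat a(t))$. Homogeneity assumption: the sets $S_i=\{z\in\{0,1\}^n:\#\{1\le j\le k:z_j=1\}=i\}$ are aggregated into $k+1$ states of a Markov chain with rates $i\to i+1$: $(k-i)\lambda(\hat a(t))$, $i\to i-1$: $i\mu(\hat a(t))$. $\approx$ denotes equality under these assumptions. *)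

(* Defs.v *)
From HB Require Import structures.
From mathcomp Require Import all_boot all_order all_algebra.
From mathcomp Require Import all_classical all_reals all_analysis.
Set Implicit Arguments. Unset Strict Implicit. Unset Printing Implicit Defensive.
Import Order.TTheory GRing.Theory Num.Theory.
Import numFieldNormedType.Exports.
Local Open Scope classical_set_scope.
Local Open Scope ring_scope.

Section Defs.
Variable R : realType.

Definition up_rate (k : nat) (lam : R -> R) (a : R) (i : nat) : R :=
  if (i < k)%N then (k - i)%:R * lam a else 0.

Definition down_rate (k : nat) (mu : R -> R) (a : R) (i : nat) : R :=
  if (0 < i < k)%N then i%:R * mu a else 0.

Definition genQ (k : nat) (lam mu ahat : R -> R) (t : R) : 'M[R]_k.+1 :=
  \matrix_(i, j)
    if (j == i.+1 :> nat) then up_rate k lam (ahat t) i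
    else if (j.+1 == i :> nat) then down_rate k mu (ahat t) i
    else if (i == j) then - (up_rate k lam (ahat t) i + down_rate k mu (ahat t) i)
    else 0.

(* Pst s t is the transition matrix from time s to time t; it solves the
   Kolmogorov forward equation d/dt Pst s t = Pst s t * Q t, Pst s s = 1
   (right derivative at t = s, two-sided derivative for t > s). *)
Definition forward_transition (k : nat) (Q : R -> 'M[R]_k.+1)
    (Pst : R -> R -> 'M[R]_k.+1) : Prop :=
  (forall s, Pst s s = 1%:M) /\
  (forall s t (i j : 'I_k.+1), s <= t ->
     (h^-1 * (Pst s (t + h) i j - Pst s t i j) @[h --> 0^'+]
        --> (Pst s t *m Q t) i j) /\
     (s < t -> h^-1 * (Pst s (t + h) i j - Pst s t i j) @[h --> 0^']
        --> (Pst s t *m Q t) i j)).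

(* Finite-dimensional probability P(X_{t_1}=j_1,...,X_{t_n}=j_n) of a Markov
   chain with transition function Pst, started from state i at time s. *)
Fixpoint fdd_prob (k : nat) (Pst : R -> R -> 'M[R]_k.+1) (s : R) (i : 'I_k.+1)
    (l : seq (R * 'I_k.+1)) : R :=
  match l with
  | [::] => 1
  | (t, j) :: l' => Pst s t i j * fdd_prob Pst t j l'
  end.

(* X is (a version of) the Markov chain with transition function Pst started at
   state 0 at time 0: all its finite-dimensional distributions at ordered times
   0 <= t_1 <= ... <= t_n are given by the transition function. *)
Definition is_markov_chain_from0 d (T : measurableType d) (P : probability T R)
    (k : nat) (Pst : R -> R -> 'M[R]_k.+1) (X : R -> T -> 'I_k.+1) : Prop :=
  forall l : seq (R * 'I_k.+1),
    path (fun a b => a.1 <= b.1) (0, ord0) l ->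
    P [set w | all (fun p => X p.1 w == p.2) l] = (fdd_prob Pst 0 ord0 l)%:E.

(* tau_k = inf { t >= 0 : X_t = k } (state k = "all key nodes active"),
   +oo if never reached. *)
Definition hitting_time (T : Type) (k : nat) (X : R -> T -> 'I_k.+1) (w : T)
  : \bar R :=
  ereal_inf [set t%:E | t in [set t : R | 0 <= t /\ X t w = ord_max]].

End Defs.

(* Main.v *)
Require Import Defs.
From HB Require Import structures.
From mathcomp Require Import all_boot all_order all_algebra.
From mathcomp Require Import all_classical all_reals all_analysis.
From mathcomp Require Import zify ring lra.
Import Order.TTheory GRing.Theory Num.Theory.
Import numFieldNormedType.Exports.
Local Open Scope classical_set_scope.
Local Open Scope ring_scope.

Section An.
Context {R : realType}.

Lemma hd_is_derive (f : R -> R) t L :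
  h^-1 * (f (t + h) - f t) @[h --> 0^'] --> L -> is_derive t 1 f L.
Proof.
move=> H.
have E : (fun h => h^-1 *: ((f \o shift t) (h *: 1) - f t)) =
         (fun h => h^-1 * (f (t+h) - f t)).
  apply/funext => h /=; rewrite [_%:A]mulr1 (addrC h). done.
have dv : derivable f t 1 by rewrite /derivable E; apply/cvg_ex; exists L.
apply: DeriveDef => //; rewrite /derive E; exact: cvg_lim.
Qed.

Lemma rd_cont (f : R -> R) t (L : R) :
  h^-1 * (f (t + h) - f t) @[h --> (0:R)^'+] --> L -> f (t + h) @[h --> (0:R)^'+] --> f t.
Proof.
move=> H.
have E : {near (0:R)^'+, (fun h => f t + h * (h^-1 * (f (t + h) - f t))) =1 (fun h => f (t + h))}.
  near=> h. rewrite mulrA divff ?mul1r ?subrKC //.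
apply: cvg_trans; first exact: (near_eq_cvg E).
have : (fun h => f t + h * (h^-1 * (f (t + h) - f t))) @ (0:R)^'+ --> f t + 0 * L.
  apply: cvgD; first exact: cvg_cst.
  apply: cvgM => //.
  apply: cvg_at_right_filter; exact: cvg_id.
by rewrite mul0r addr0.
Unshelve. all: end_near. Qed.


Lemma ndecr_right (f : R -> R) (s : R) (df : R -> R) :
  (forall t : R, s < t -> is_derive t 1 f (df t)) ->
  (forall t, s < t -> 0 <= df t) ->
  f (s + h) @[h --> (0:R)^'+] --> f s ->
  forall t, s <= t -> f s <= f t.
Proof.
move=> D P C t; rewrite le_eqVlt => /orP[/eqP<-//|st].
have mono : forall u v, s < u -> u <= v -> f u <= f v.
  move=> u v su uv.
  have dx : forall x, u <= x -> is_derive x 1 f (df x).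
    by move=> x ux; apply: D; apply: lt_le_trans ux.
  apply: (@ger0_derive1_ndecr _ f u v) => //.
  - by move=> x; rewrite in_itv /= => /andP[/ltW ux _]; have [] := dx x ux.
  - move=> x; rewrite in_itv /= => /andP[/ltW ux _].
    have ? := dx x ux; rewrite derive1E derive_val; apply: P.
    exact: lt_le_trans ux.
  - apply: derivable_within_continuous => x; rewrite in_itv/= => /andP[ux _].
    by have [] := dx x ux.
apply: (cvgr_to_le C); near=> h; apply: mono.
  by rewrite ltrDl; near: h; exact: nbhs_right_gt.
rewrite -lerBrDl; apply: ltW; near: h; apply: nbhs_right_lt.
by rewrite subr_gt0.
Unshelve. all: end_near. Qed.


Lemma gronwall (f : R -> R) (C : R) (df : R -> R) :
  (forall t : R, 0 < t -> is_derive t 1 f (df t)) ->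
  (forall t : R, 0 < t -> - C * f t <= df t) ->
  f (0 + h) @[h --> (0:R)^'+] --> f 0 ->
  forall t : R, 0 <= t -> expR (- C * t) * f 0 <= f t.
Proof.
move=> D P Cf t t0.
pose e := fun x : R => expR (C * x).
have de : forall x : R, is_derive x 1 e (expR (C * x) * C).
  have dl : forall x : R, is_derive x 1 ( *%R C) C.
    move=> x; have := @is_deriveZ _ _ _ id C x 1 1 (is_derive_id x 1).
    have -> : C \*: (@id R) = *%R C by apply/funext => y.
    by rewrite /GRing.scale /= mulr1.
  by move=> x; apply: is_derive1_comp.
have H := @ndecr_right (e * f) 0 (fun x => e x *: df x + f x *: (expR (C * x) * C)).
suff G : (e * f) 0 <= (e * f) t.
  have {}G : expR (C * 0) * f 0 <= expR (C * t) * f t := G.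
  move: G; rewrite mulr0 expR0 mul1r => G.
  by rewrite mulNr expRN ler_pdivrMl ?expR_gt0.
apply: (H _ _ _ t t0).
- move=> x x0; have := D x x0; apply: is_deriveM.
- move=> x x0; rewrite /GRing.scale /= /e.
  rewrite [f x * _]mulrC -mulrA -mulrDr mulr_ge0 ?expR_ge0 //.
  by have := P x x0; rewrite mulNr -subr_ge0 opprK.
- change (((fun h => e (0 + h)) \* (fun h => f (0 + h))) @ (0:R)^'+ --> e 0 * f 0).
  apply: cvgM => //; rewrite /e.
  have h1 : (fun h => C * (0 + h)) @ (0:R)^'+ --> C * 0.
    apply: cvg_at_right_filter.
    have -> : C * 0 = C * (0 + 0) by rewrite addr0.
    apply: cvgM; first exact: cvg_cst.
    apply: cvgD; [exact: cvg_cst | exact: cvg_id].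
  by apply: continuous_cvg; [exact: continuous_expR | exact: h1].
Qed.

End An.

Section Prob.
Context d (T : measurableType d) (R : realType) (P : probability T R).
Definition pr (A : set T) : R := fine (P A).

Lemma prE {A} : measurable A -> P A = (pr A)%:E.
Proof. by move=> mA; rewrite /pr fineK // fin_num_measure. Qed.

Lemma pr_ge0 A : 0 <= pr A.
Proof. by rewrite /pr fine_ge0. Qed.

Lemma pr_le {A B} : measurable A -> measurable B -> A `<=` B -> pr A <= pr B.
Proof.
move=> mA mB AB; have H := le_measure P (mem_set mA) (mem_set mB) AB.
by rewrite /pr; apply: fine_le => //; rewrite fin_num_measure.
Qed.

Lemma pr_le1 {A} : measurable A -> pr A <= 1.
Proof. by move=> mA; have := probability_le1 P mA; rewrite (prE mA) lee_fin. Qed.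

Lemma prDI {A B} : measurable A -> measurable B -> pr A = pr (A `\` B) + pr (A `&` B).
Proof.
move=> mA mB; rewrite /pr {1}(measureDI P mA mB) fineD // fin_num_measure //.
  exact: measurableD.
exact: measurableI.
Qed.

Lemma prC {A} : measurable A -> pr (~` A) = 1 - pr A.
Proof.
move=> mA; rewrite /pr (probability_setC P mA) fineB // fin_num_measure //.
Qed.

Lemma pr_null {A} : measurable A -> P.-negligible A -> pr A = 0.
Proof. by move=> mA /(negligibleP _ mA) H; rewrite /pr H. Qed.

Lemma pr_negl {A} : measurable A -> pr A = 0 -> P.-negligible A.
Proof.
move=> mA h; apply/negligibleP => //.
rewrite -[X in X = _]fineK; last exact: fin_num_measure.
by move: h; rewrite /pr => ->.
Qed.

End Prob.
Arguments pr {d T R} P A.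
Arguments pr_ge0 {d T R} P A.
Arguments prE {d T R P A}.
Arguments pr_le {d T R P A B}.
Arguments pr_le1 {d T R P A}.
Arguments prDI {d T R P A B}.
Arguments prC {d T R P A}.
Arguments pr_null {d T R P A}.
Arguments pr_negl {d T R P A}.

Section Qlem.
Context (R : realType) (k : nat) (lam mu ahat : R -> R).
Hypothesis hk : (1 <= k)%N.
Hypothesis lam0 : forall x, 0 <= lam x.
Hypothesis mu0 : forall x, 0 <= mu x.
Hypothesis lamD : {in `[0, 1] &, {homo lam : x y / x <= y >-> y <= x}}.
Hypothesis muI : {in `[0, 1] &, {homo mu : x y / x <= y}}.
Hypothesis a01 : forall t, 0 <= ahat t <= 1.

Local Notation Q := (genQ k lam mu ahat).

Lemma Q_off t (i j : 'I_k.+1) : i != j -> 0 <= Q t i j.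
Proof.
move=> ij; rewrite /genQ mxE.
case: ifP => _; first by rewrite /up_rate; case: ifP => _ //; apply: mulr_ge0.
case: ifP => _; first by rewrite /down_rate; case: ifP => _ //; apply: mulr_ge0.
by rewrite (negbTE ij).
Qed.

Lemma Q_diag t (j : 'I_k.+1) : - (k%:R * (lam 0 + mu 1)) <= Q t j j.
Proof.
rewrite /genQ mxE.
have -> : ((j:nat) == (j : nat).+1) = false by lia.
have -> : ((j : nat).+1 == (j:nat)) = false by lia.
rewrite eqxx lerN2 mulrDr; apply: lerD.
  rewrite /up_rate; case: ifP => _; last by apply: mulr_ge0.
  apply: ler_pM => //; first by rewrite ler_nat; lia.
  have /andP[h0 h1] := a01 t.
  by apply: lamD => //; rewrite in_itv /= ?lexx ?ler01 ?h0 ?h1.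
rewrite /down_rate; case: ifP => hj; last by apply: mulr_ge0.
apply: ler_pM => //; first by rewrite ler_nat; lia.
have /andP[h0 h1] := a01 t.
by apply: muI => //; rewrite in_itv /= ?lexx ?ler01 ?h0 ?h1.
Qed.

Lemma Q_rowge (M : 'M[R]_k.+1) t i j : (forall l, 0 <= M i l) ->
  M i j * Q t j j <= (M *m Q t) i j.
Proof.
move=> M0; rewrite [in X in _ <= X]mxE (bigD1 j) //= lerDl; apply: sumr_ge0 => l hl.
by apply: mulr_ge0 => //; apply: Q_off.
Qed.

Lemma Q_col (M : 'M[R]_k.+1) t i :
  (M *m Q t) i ord_max = M i (inord k.-1) * lam (ahat t).
Proof.
have e := prednK hk.
rewrite mxE (bigD1 (inord k.-1)) //= big1 ?addr0.
  congr (_ * _); rewrite /genQ mxE /= inordK; last by rewrite ltnS leq_pred.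
  rewrite prednK // eqxx /up_rate.
  rewrite ltn_predL hk.
  by rewrite -{1}e subSnn mul1r.
move=> l hl; rewrite /genQ mxE /=.
have hl' : (l : nat) != k.-1.
  apply: contra hl => /eqP hl; apply/eqP/val_inj; rewrite /= inordK // ltnS leq_pred //.
case: (k =P (l:nat).+1) => [/= hkl|_]; first by move: hl'; rewrite [in X in _ != X]hkl /= eqxx.
case: (k.+1 =P (l:nat)) => [hkl|_]; first by have := ltn_ord l; lia.
case: ifP => /eqP hlm; last by rewrite mulr0.
rewrite hlm /up_rate /down_rate /= ltnn andbF.
by rewrite addr0 oppr0 mulr0.
Qed.

Lemma Q_kk t : Q t ord_max ord_max = 0.
Proof.
rewrite /genQ mxE /=.
case: (k =P k.+1) => [|_]; first lia.
case: (k.+1 =P k) => [|_]; first lia.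
by rewrite eqxx /up_rate /down_rate /= ltnn andbF addr0 oppr0.
Qed.

End Qlem.

Section Main.
Context (R : realType) (d : measure_display) (T : measurableType d)
  (P : probability T R) (k : nat) (lam mu ahat : R -> R)
  (Pst : R -> R -> 'M[R]_k.+1) (X : R -> T -> 'I_k.+1).
Hypothesis hk : (1 <= k)%N.
Hypothesis lamD : {in `[0, 1] &, {homo lam : x y / x <= y >-> y <= x}}.
Hypothesis muI : {in `[0, 1] &, {homo mu : x y / x <= y}}.
Hypothesis lam0 : forall x, 0 <= lam x.
Hypothesis mu0 : forall x, 0 <= mu x.
Hypothesis a01 : forall t, 0 <= ahat t <= 1.
Hypothesis FT : forward_transition (genQ k lam mu ahat) Pst.
Hypothesis mX : forall t (j : 'I_k.+1), measurable [set w | X t w = j].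
Hypothesis MC : is_markov_chain_from0 P Pst X.
Hypothesis RC : forall w t, 0 <= t -> exists2 e : R, 0 < e &
      forall s, t <= s < t + e -> X s w = X t w.

Local Notation Q := (genQ k lam mu ahat).
Let Q_rowge' := @Q_rowge R k lam mu ahat lam0 mu0.
Let Q_kk' := @Q_kk R k lam mu ahat hk.
Let Q_diag' := @Q_diag R k lam mu ahat hk lam0 mu0 lamD muI a01.
Let Q_col' := @Q_col R k lam mu ahat hk.
Local Notation pr := (pr P).
Local Notation A s := [set w | X s w = ord_max].

Lemma p1 s j : 0 <= s -> pr [set w | X s w = j] = Pst 0 s ord0 j.
Proof.
move=> s0; have := MC [:: (s, j)]; rewrite /= s0 => /(_ isT) H.
have -> : [set w | X s w = j] = [set w | (X s w == j) && true].
  by apply/seteqP; split => w /=; rewrite andbT => /eqP.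
by rewrite /pr H /= mulr1.
Qed.

Lemma p2 q s i j : 0 <= q -> q <= s ->
  pr ([set w | X q w = i] `&` [set w | X s w = j]) = Pst 0 q ord0 i * Pst q s i j.
Proof.
move=> q0 qs; have := MC [:: (q, i); (s, j)]; rewrite /= q0 qs => /(_ isT) H.
have -> : [set w | X q w = i] `&` [set w | X s w = j] =
          [set w | [&& X q w == i, X s w == j & true]].
  apply/seteqP; split => w /=; rewrite andbT; first by move=> [-> ->]; rewrite !eqxx.
  by move=> /andP[/eqP -> /eqP ->].
by rewrite /pr H /= mulr1.
Qed.

Lemma P_ge0 s j : 0 <= s -> 0 <= Pst 0 s ord0 j.
Proof. by move=> s0; rewrite -p1 // pr_ge0. Qed.

Lemma row_ge0 q s l : 0 <= q -> q <= s -> 0 < Pst 0 q ord0 ord_max ->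
  0 <= Pst q s ord_max l.
Proof.
move=> q0 qs pq; have := pr_ge0 P ([set w | X q w = ord_max] `&` [set w | X s w = l]).
by rewrite p2 // pmulr_rge0.
Qed.

Lemma D2 (s t : R) i j : s < t ->
  is_derive t 1 (fun u => Pst s u i j) ((Pst s t *m Q t) i j).
Proof.
move=> st; have [_ H] := FT; have [_ H2] := H s t i j (ltW st).
exact: hd_is_derive (H2 st).
Qed.

Lemma RC2 (s : R) i j : Pst s (s + h) i j @[h --> (0:R)^'+] --> Pst s s i j.
Proof. by have [_ H] := FT; have [H1 _] := H s s i j (lexx s); exact: (@rd_cont _ (fun u => Pst s u i j) s _ H1). Qed.

Lemma Pss (s : R) i j : Pst s s i j = (i == j)%:R.
Proof. by have [H _] := FT; rewrite H mxE. Qed.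


Lemma absorb_kk q s : 0 <= q -> q <= s -> 0 < Pst 0 q ord0 ord_max ->
  Pst q s ord_max ord_max = 1.
Proof.
move=> q0 qs pq; apply/le_anti/andP; split.
  rewrite -(ger_pMr _ pq) -p2 // -p1 //; apply: pr_le; try exact: mX.
    exact: measurableI.
  exact: subIsetl.
have := @ndecr_right _ (fun u => Pst q u ord_max ord_max) q
  (fun u => (Pst q u *m Q u) ord_max ord_max).
move=> /(_ _ _ (RC2 q ord_max ord_max) s qs); rewrite Pss eqxx; apply => //.
- by move=> t qt; apply: D2.
- move=> t qt; apply: le_trans (Q_rowge' _ _ _ _ _).
    by rewrite Q_kk' mulr0.
  by move=> l; apply: row_ge0 => //; apply: ltW.
Qed.

Lemma absorb q s : 0 <= q -> q <= s -> pr (A q `\` A s) = 0.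
Proof.
move=> q0 qs; have := prDI (P:=P) (mX q ord_max) (mX s ord_max).
rewrite p1 // p2 //.
have [->|pq] := eqVneq (Pst 0 q ord0 ord_max) 0.
  by rewrite mul0r => h; lra.
have {}pq : 0 < Pst 0 q ord0 ord_max by rewrite lt_def pq P_ge0.
rewrite absorb_kk // mulr1 => h; lra.
Qed.

Definition Cst : R := k%:R * (lam 0 + mu 1).

Lemma p0_pos t : 0 <= t -> 0 < Pst 0 t ord0 ord0.
Proof.
move=> t0.
have := @gronwall _ (fun u => Pst 0 u ord0 ord0) Cst
  (fun u => (Pst 0 u *m Q u) ord0 ord0).
move=> /(_ _ _ (RC2 0 ord0 ord0) t t0); rewrite Pss eqxx mulr1 => H.
apply: lt_le_trans (H _ _); first exact: expR_gt0.
- by move=> u u0; apply: D2.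
- move=> u u0; apply: le_trans (Q_rowge' _ _ _ _ _).
  + rewrite mulrC; apply: ler_wpM2l; first exact: P_ge0 (ltW u0).
    exact: Q_diag'.
  + by move=> l; apply: P_ge0; apply: ltW.
Qed.

Lemma pk_lt1 t : 0 <= t -> Pst 0 t ord0 ord_max < 1.
Proof.
move=> t0.
have h : pr [set w | X t w = ord0] <= pr (~` A t).
  apply: pr_le; [exact: (mX t ord0) | exact: (measurableC (mX t ord_max)) |].
  move=> w /= -> /(congr1 val) /=; lia.
move: h; rewrite prC; last exact: mX.
rewrite !p1 //.
have := p0_pos t t0.
lra.
Qed.


Definition qn (n : nat) : R := oapp (fun q : rat => ratr q) 0 (unpickle n).
Definition piece (t : R) n : set T :=
  if (0 <= qn n) && (qn n < t) then A (qn n) else set0.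
Definition U (t : R) : set T := \bigcup_n piece t n.
Local Notation tau := (hitting_time X).

Lemma mU t : measurable (U t).
Proof.
by apply: bigcupT_measurable => n; rewrite /piece; case: ifP => _ //.
Qed.

Lemma tau_le w (s : R) : 0 <= s -> X s w = ord_max -> (tau w <= s%:E)%E.
Proof. by move=> s0 Xs; apply: ereal_inf_lbound; exists s. Qed.

Lemma tau_ltP w (t : R) : (tau w < t%:E)%E <-> U t w.
Proof.
split.
  move/ereal_inf_lt => [_ [r [r0 Xr] <-]]; rewrite lte_fin => rt.
  have [e e0 He] := RC w r r0.
  have : r < Num.min (r + e) t by rewrite lt_min ltrDl e0 rt.
  move/rat_in_itvoo => [q]; rewrite in_itv /= => /andP[rq].
  rewrite lt_min => /andP[qe qt].
  exists (pickle q) => //; rewrite /piece /qn pickleK /=.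
  rewrite (le_trans r0 (ltW rq)) qt /= He // (ltW rq) qe //.
move=> [n _]; rewrite /piece; case: ifP => // /andP[q0 qt] Xq.
by apply: le_lt_trans (tau_le _ _ q0 Xq) _; rewrite lte_fin.
Qed.

Lemma tau_leP w (s : R) : 0 <= s ->
  (tau w <= s%:E)%E <-> (X s w = ord_max \/ U s w).
Proof.
move=> s0; split; last first.
  by case => [Xs | Us]; [exact: tau_le | apply/ltW/tau_ltP].
move=> H; have [e e0 He] := RC w s s0.
have : (tau w < (s + e)%:E)%E by apply: le_lt_trans H _; rewrite lte_fin ltrDl.
move/ereal_inf_lt => [_ [r [r0 Xr] <-]]; rewrite lte_fin => rse.
case: (leP s r) => sr.
  by left; rewrite -(He r) ?sr ?rse.
by right; apply/tau_ltP; apply: le_lt_trans (tau_le _ _ r0 Xr) _; rewrite lte_fin.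
Qed.

Lemma U_mono (s s' : R) : s <= s' -> U s `<=` U s'.
Proof.
move=> ss w [n _]; rewrite /piece; case: ifP => // /andP[q0 qs] Xq.
by exists n => //; rewrite /piece q0 (lt_le_trans qs ss).
Qed.

Lemma UnA s : 0 <= s -> pr (U s `\` A s) = 0.
Proof.
move=> s0; apply: pr_null; first by apply: measurableD; [exact: mU | exact: mX].
apply: (negligibleS (A := \bigcup_n (piece s n `\` A s))).
  by move=> w [[n _ pn] nA]; exists n.
apply: negligible_bigcup => n; rewrite /piece; case: ifP => [/andP[q0 qs]|_].
  apply: pr_negl; first by apply: measurableD; exact: mX.
  by apply: absorb => //; apply: ltW.
rewrite set0D; exact: negligible_set0.
Qed.


Lemma pk_cont (t : R) : 0 < t -> {for t, continuous (fun u => Pst 0 u ord0 ord_max)}.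
Proof.
move=> t0; have [dv _] := @D2 0 t ord0 ord_max t0.
by apply/differentiable_continuous/derivable1_diffP.
Qed.

Lemma ord0_max : (ord0 == ord_max :> 'I_k.+1) = false.
Proof. by apply/eqP => /(congr1 val) /=; lia. Qed.

Lemma UA t : 0 <= t -> pr (U t) = Pst 0 t ord0 ord_max.
Proof.
move=> t0.
have mA := mX t ord_max; have mUt := mU t.
have e1 := prDI (P:=P) mUt mA; have e2 := prDI (P:=P) mA mUt.
rewrite UnA // add0r in e1; rewrite setIC in e2.
suff h : pr (A t `\` U t) = 0 by rewrite -p1 // e1 e2 h add0r.
apply/le_anti; rewrite pr_ge0 andbT.
have [tpos|tle0] := ltP 0 t; last first.
  have t00 : t = 0 by apply/le_anti; rewrite tle0 t0.
  subst t; apply: le_trans (pr_le _ _ (@subDsetl _ _ _)) _.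
  - by apply: measurableD.
  - exact: mA.
  by rewrite p1 // Pss ord0_max.
have lim : (fun x => Pst 0 t ord0 ord_max - Pst 0 (t - x) ord0 ord_max) @ (0:R)^'+ --> 0.
  have c := pk_cont t tpos.
  have h1 : (fun x => t - x) @ (0:R)^'+ --> t - 0.
    apply: cvg_at_right_filter.
    apply: cvgB; [exact: cvg_cst | exact: cvg_id].
  rewrite subr0 in h1.
  have h2 := @continuous_cvg _ _ _ _ _ (fun x => t - x) (fun u => Pst 0 u ord0 ord_max) t c h1.
  have h3 : (fun x => Pst 0 t ord0 ord_max - Pst 0 (t - x) ord0 ord_max) @ (0:R)^'+
     --> Pst 0 t ord0 ord_max - Pst 0 t ord0 ord_max.
    apply: cvgB; [exact: cvg_cst | exact: h2].
  by rewrite subrr in h3.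
apply: (cvgr_to_ge lim); near=> x.
have x0 : 0 < x by near: x; exact: nbhs_right_gt.
have xt : x < t by near: x; exact: nbhs_right_lt.
have sub : A t `\` U t `<=` A t `\` A (t - x).
  move=> w [At nU]; split => // Atd; apply: nU; apply/tau_ltP.
  apply: le_lt_trans (tau_le _ _ _ Atd) _; first by rewrite subr_ge0 ltW.
  by rewrite lte_fin ltrBlDr ltrDl.
have mtx := mX (t - x) ord_max.
apply: le_trans (pr_le _ _ sub) _.
- by apply: measurableD.
- by apply: measurableD.
have f1 := prDI (P:=P) mA mtx; have f2 := prDI (P:=P) mtx mA.
have tx0 : 0 <= t - x by rewrite subr_ge0 ltW.
have txt : t - x <= t by rewrite lerBlDr lerDl ltW.
rewrite absorb // in f2.
rewrite setIC in f2; rewrite !p1 // in f1 f2.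
lra.
Unshelve. all: end_near. Qed.


Lemma main_sec (t : R) : 0 <= t ->
    let tau := hitting_time X in
    let p := fun j : 'I_k.+1 => fine (P [set w | X t w = j]) in
    (0 < fine (P [set w | (t%:E <= tau w)%E]))
    /\
    (Dt^-1 * (fine (P [set w | (t%:E <= tau w)%E /\ (tau w <= (t + Dt)%:E)%E])
              / fine (P [set w | (t%:E <= tau w)%E]))
       @[Dt --> 0^'+]
     --> lam (ahat t) * p (inord k.-1) / (1 - p ord_max)).
Proof.
move=> t0 tau p.
have S1 : [set w | (t%:E <= tau w)%E] = ~` U t.
  apply/seteqP; split => w /=.
  - by move=> h /tau_ltP h'; move: h; rewrite leNgt h'.
  - by move=> nU; rewrite leNgt; apply/negP => /tau_ltP.
have E1 : fine (P [set w | (t%:E <= tau w)%E]) = 1 - Pst 0 t ord0 ord_max.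
  rewrite S1; change (pr (~` U t) = 1 - Pst 0 t ord0 ord_max); rewrite prC ?UA //; exact: mU.
have pE : forall j, p j = Pst 0 t ord0 j by move=> j; exact: p1.
have E2 : forall D, 0 < D ->
    fine (P [set w | (t%:E <= tau w)%E /\ (tau w <= (t + D)%:E)%E]) =
    Pst 0 (t + D) ord0 ord_max - Pst 0 t ord0 ord_max.
  move=> D D0; set s := t + D.
  have s0 : 0 <= s by rewrite addr_ge0 // ltW.
  have ts : t <= s by rewrite lerDl ltW.
  have -> : [set w | (t%:E <= tau w)%E /\ (tau w <= s%:E)%E] = (A s `|` U s) `\` U t.
    apply/seteqP; split => w /=.
    - move=> [h1 /(tau_leP w s s0) h2]; split => // /tau_ltP h'.
      by move: h1; rewrite leNgt h'.
    - move=> [h2 nU]; split.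
        by rewrite leNgt; apply/negP => /tau_ltP.
      by apply/(tau_leP w s s0).
  change (pr ((A s `|` U s) `\` U t) = Pst 0 s ord0 ord_max - Pst 0 t ord0 ord_max).
  have mAU : measurable (A s `|` U s) by apply: measurableU; [exact: mX | exact: mU].
  have f := prDI (P:=P) mAU (mU t).
  have g := prDI (P:=P) mAU (mX s ord_max).
  have e1 : (A s `|` U s) `&` U t = U t.
    by apply: setIidr => w Uw; right; exact: (U_mono _ _ ts).
  have e2 : (A s `|` U s) `\` A s = U s `\` A s.
    apply/seteqP; split => w /=; first by move=> [[h|h] h']; [contradiction|].
    by move=> [h h']; split => //; right.
  have e3 : (A s `|` U s) `&` A s = A s.
    by apply: setIidr => w h; left.
  rewrite e1 in f; rewrite e2 e3 UnA // p1 // in g; rewrite UA // in f.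
  lra.
split.
  by rewrite E1 subr_gt0 pk_lt1.
have lim0 : h^-1 * (Pst 0 (t + h) ord0 ord_max - Pst 0 t ord0 ord_max) @[h --> 0^'+]
    --> (Pst 0 t *m Q t) ord0 ord_max.
  by have [_ H] := FT; have [H1 _] := H 0 t ord0 ord_max t0.
rewrite Q_col' in lim0.
have -> : lam (ahat t) * p (inord k.-1) / (1 - p ord_max) =
    Pst 0 t ord0 (inord k.-1) * lam (ahat t) * (1 - Pst 0 t ord0 ord_max)^-1.
  by rewrite !pE [lam _ * _]mulrC.
have E : {near (0:R)^'+,
   (fun h => h^-1 * (Pst 0 (t + h) ord0 ord_max - Pst 0 t ord0 ord_max) *
             (1 - Pst 0 t ord0 ord_max)^-1) =1
   (fun Dt => Dt^-1 * (fine (P [set w | (t%:E <= tau w)%E /\ (tau w <= (t + Dt)%:E)%E])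
              / fine (P [set w | (t%:E <= tau w)%E])))}.
  near=> h; rewrite E1 E2 ?mulrA //.
apply: cvg_trans; first exact: (near_eq_cvg E).
apply: cvgM => //; exact: cvg_cst.
Unshelve. all: end_near. Qed.

End Main.

Theorem theorem2 (R : realType) (d : measure_display) (T : measurableType d)
  (P : probability T R) (k : nat) (lam mu ahat : R -> R)
  (Pst : R -> R -> 'M[R]_k.+1) (X : R -> T -> 'I_k.+1) :
  (1 <= k)%N ->
  (* rates: lam decreasing, mu increasing, both nonnegative and continuous;
     ahat a continuous fraction in [0,1] *)
  {in `[0, 1] &, {homo lam : x y / x <= y >-> y <= x}} ->
  {in `[0, 1] &, {homo mu : x y / x <= y}} ->
  (forall x, 0 <= lam x) -> (forall x, 0 <= mu x) ->
  continuous lam -> continuous mu -> continuous ahat ->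
  (forall t, 0 <= ahat t <= 1) ->
  (* X is the aggregated time-inhomogeneous Markov chain, started at 0 *)
  forward_transition (genQ k lam mu ahat) Pst ->
  (forall t (j : 'I_k.+1), measurable [set w | X t w = j]) ->
  is_markov_chain_from0 P Pst X ->
  (* right-continuous (piecewise constant) sample paths *)
  (forall w t, 0 <= t -> exists2 e : R, 0 < e &
      forall s, t <= s < t + e -> X s w = X t w) ->
  forall t : R, 0 <= t ->
    let tau := hitting_time X in
    let p := fun j : 'I_k.+1 => fine (P [set w | X t w = j]) in
    (0 < fine (P [set w | (t%:E <= tau w)%E]))
    /\
    (Dt^-1 * (fine (P [set w | (t%:E <= tau w)%E /\ (tau w <= (t + Dt)%:E)%E])
              / fine (P [set w | (t%:E <= tau w)%E]))
       @[Dt --> 0^'+]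
     --> lam (ahat t) * p (inord k.-1) / (1 - p ord_max)).
Proof.
move=> hk lamD muI lam0 mu0 _ _ _ a01 FT mX MC RC t t0.
exact: (@main_sec R d T P k lam mu ahat Pst X hk lamD muI lam0 mu0 a01 FT mX MC RC t t0).
Qed.
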